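(* Let $(P,\leqslant)$ be a conditionally-complete interpolating poset and let $P^* := \{x \in P : \exists\, y \in P,\ y \ll x\}$ with the induced order. Then $P^*$ is a conditionally-complete interpolating subposet of $P$.
   Context: A poset is conditionally-complete if every nonempty subset bounded above has a supremum. A nonempty subset $D$ is directed if any two elements of $D$ have an upper bound in $D$. For a poset $R$ and $x,y \in R$, $x \ll_R y$ means: for every directed subset $D$ of $R$ bounded above in $R$ with supremum $d_0$ in $R$, $y \leqslant d_0$ implies $x \leqslant d$ for some $d \in D$; write $\ll$ for $\ll_P$. A poset $R$ is interpolating if whenever $x \ll_R y$ there is $z \in R$ with $x \ll_R z \ll_R y$. A subset $Q \subseteq P$ with the induced order is a subposet of $P$ if for all $x,y \in Q$: $x \ll_Q y \iff x \ll y$. *)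

(* Defs.v *)
Definition is_poset {T : Type} (le : T -> T -> Prop) : Prop :=
  (forall x, le x x) /\
  (forall x y, le x y -> le y x -> x = y) /\
  (forall x y z, le x y -> le y z -> le x z).

Definition upper_bound {T : Type} (le : T -> T -> Prop) (S : T -> Prop) (u : T) : Prop :=
  forall s, S s -> le s u.

Definition is_sup_in {T : Type} (le : T -> T -> Prop) (R S : T -> Prop) (s : T) : Prop :=
  R s /\ upper_bound le S s /\ (forall u, R u -> upper_bound le S u -> le s u).

Definition cond_complete {T : Type} (le : T -> T -> Prop) (R : T -> Prop) : Prop :=
  forall S : T -> Prop, (forall x, S x -> R x) -> (exists x, S x) ->
    (exists u, R u /\ upper_bound le S u) -> exists s, is_sup_in le R S s.

Definition directed {T : Type} (le : T -> T -> Prop) (D : T -> Prop) : Prop :=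
  (exists d, D d) /\
  (forall a b, D a -> D b -> exists c, D c /\ le a c /\ le b c).

Definition way_below_in {T : Type} (le : T -> T -> Prop) (R : T -> Prop) (x y : T) : Prop :=
  forall (D : T -> Prop) (d0 : T),
    (forall d, D d -> R d) -> directed le D ->
    (exists u, R u /\ upper_bound le D u) ->
    is_sup_in le R D d0 -> le y d0 -> exists d, D d /\ le x d.

Definition setT {T : Type} : T -> Prop := fun _ => True.

Definition interpolating {T : Type} (le : T -> T -> Prop) (R : T -> Prop) : Prop :=
  forall x y, R x -> R y -> way_below_in le R x y ->
    exists z, R z /\ way_below_in le R x z /\ way_below_in le R z y.

Definition subposet {T : Type} (le : T -> T -> Prop) (Q : T -> Prop) : Prop :=
  forall x y, Q x -> Q y -> (way_below_in le Q x y <-> way_below_in le setT x y).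

(* Main.v *)
Require Import Defs.

Section S.
Variable T : Type.
Variable le : T -> T -> Prop.
Hypothesis Hp : is_poset le.
Hypothesis Hc : cond_complete le setT.
Hypothesis Hi : interpolating le setT.

Definition PS : T -> Prop := fun x => exists y, way_below_in le setT y x.

Lemma trans_ x y z : le x y -> le y z -> le x z.
Proof. destruct Hp as [_ [_ H]]; eauto. Qed.

Lemma refl_ x : le x x.
Proof. destruct Hp as [H _]; eauto. Qed.

Lemma wb_up y x x' : way_below_in le setT y x -> le x x' -> way_below_in le setT y x'.
Proof.
  intros H Hx D d0 H1 H2 H3 H4 H5. apply (H D d0); auto. eapply trans_; eauto.
Qed.

Lemma PS_up x x' : PS x -> le x x' -> PS x'.
Proof. intros [y Hy] H. exists y. eapply wb_up; eauto. Qed.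

Lemma cc : cond_complete le PS.
Proof.
  intros S HS [x Sx] [u [Pu Hu]].
  destruct (Hc S (fun _ _ => I) (ex_intro _ x Sx) (ex_intro _ u (conj I Hu))) as [s [_ [Hs1 Hs2]]].
  exists s. split; [|split]; auto.
  - apply (PS_up x); auto.
  - intros v _ Hv. apply Hs2; [exact I|auto].
Qed.

Lemma sub1 x y : PS x -> PS y -> way_below_in le setT x y -> way_below_in le PS x y.
Proof.
  intros Px Py H D d0 HD Hd Hb [Pd0 [Hd1 Hd2]] Hy.
  apply (H D d0); auto.
  - intros; exact I.
  - destruct Hb as [u [_ Hu]]. exists u; split; [exact I| auto].
  - split; [exact I|split; auto].
    intros u _ Hu.
    destruct Hc with (S := D) as [s [_ [Hs1 Hs2]]]; auto.
    + intros; exact I.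
    + apply Hd.
    + exists u; split; [exact I|auto].
    + destruct Hd as [[d Dd] _].
      assert (PS s) by (apply (PS_up d); auto).
      apply trans_ with s; auto. apply Hs2; [exact I|auto].
Qed.

Lemma sub2 x y : PS x -> PS y -> way_below_in le PS x y -> way_below_in le setT x y.
Proof.
  intros Px Py H D d0 _ Hd Hb [_ [Hd1 Hd2]] Hy.
  destruct Py as [w Hw].
  destruct (Hi w y I I Hw) as [z [_ [Hwz Hzy]]].
  destruct (Hzy D d0 (fun _ _ => I) Hd Hb (conj I (conj Hd1 Hd2)) Hy) as [d1 [Dd1 Hzd1]].
  assert (Pd1 : PS d1) by (exists w; eapply wb_up; eauto).
  set (D' := fun e => D e /\ PS e).
  assert (Hup : forall d, D d -> exists e, D' e /\ le d e).
  { intros d Dd. destruct Hd as [_ Hd].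
    destruct (Hd d d1 Dd Dd1) as [c [Dc [H1 H2]]].
    exists c. split; auto. split; auto. eapply PS_up; eauto. }
  destruct (H D' d0) as [d [[Dd _] Hxd]].
  - intros e [_ Pe]; auto.
  - split.
    + exists d1; split; auto.
    + intros a b [Da Pa] [Db _]. destruct Hd as [_ Hd].
      destruct (Hd a b Da Db) as [c [Dc [H1 H2]]].
      exists c. split; [split; [auto| eapply PS_up; eauto]|auto].
  - assert (PS d0) by (apply (PS_up d1); auto).
    exists d0. split; auto. intros e [De _]; auto.
  - split; [apply (PS_up d1); auto|split].
    + intros e [De _]; auto.
    + intros u Pu Hu. apply Hd2; [exact I|]. intros d Dd.
      destruct (Hup d Dd) as [e [De' He]]. apply trans_ with e; auto.
  - exact Hy.
  - exists d; auto.
Qed.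
End S.

Theorem corollary2p5 (T : Type) (le : T -> T -> Prop) :
  is_poset le -> cond_complete le setT -> interpolating le setT ->
  let Pstar : T -> Prop := fun x => exists y, way_below_in le setT y x in
  cond_complete le Pstar /\ interpolating le Pstar /\ subposet le Pstar.
Proof.
  intros Hp Hc Hi Pstar.
  change Pstar with (PS T le).
  split; [apply cc; auto|split].
  - intros x y Px Py H.
    apply sub2 in H; auto.
    destruct (Hi x y I I H) as [z [_ [H1 H2]]].
    assert (Pz : PS T le z) by (exists x; auto).
    exists z. split; auto. split; apply sub1; auto.
  - intros x y Px Py. split; [apply sub2; auto | apply sub1; auto].
Qed.
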